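(* Let $\Gamma$ be a group generated by $d$ elements and let $N$ be a $\mathbb{Z}\Gamma$-module generated by $t$ elements as a $\mathbb{Z}\Gamma$-module. Suppose $N_0\le N$ is a $\mathbb{Z}\Gamma$-submodule of finite index $b=|N:N_0|$. Then $N_0$ can be generated by at most $t+(2d+1)\log_2 b$ elements as a $\mathbb{Z}\Gamma$-module. *)

(* Defs.v *)
From Stdlib Require Import Reals.
From mathcomp Require Import all_boot all_algebra.
Set Implicit Arguments. Unset Strict Implicit. Unset Printing Implicit Defensive.
Import GRing.Theory.

Record is_group (G : Type) (mul : G -> G -> G) (one : G) (inv : G -> G) : Prop := {
  grp_mulA : forall x y z, mul x (mul y z) = mul (mul x y) z;
  grp_mul1 : forall x, mul one x = x;
  grp_mulV : forall x, mul (inv x) x = one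
}.

Inductive in_subgroup_gen (G : Type) (mul : G -> G -> G) (one : G) (inv : G -> G)
    (S : G -> Prop) : G -> Prop :=
  | sg_base x : S x -> in_subgroup_gen mul one inv S x
  | sg_one : in_subgroup_gen mul one inv S one
  | sg_mul x y : in_subgroup_gen mul one inv S x -> in_subgroup_gen mul one inv S y ->
                 in_subgroup_gen mul one inv S (mul x y)
  | sg_inv x : in_subgroup_gen mul one inv S x -> in_subgroup_gen mul one inv S (inv x).

Definition group_generated_by (G : Type) (mul : G -> G -> G) (one : G) (inv : G -> G)
    (gens : seq G) : Prop :=
  forall g, in_subgroup_gen mul one inv (fun x => List.In x gens) g.

(* A (left) ZG-module structure on the abelian group N: an action of G on N
   by additive maps, i.e. a group homomorphism G -> Aut(N). *)
Record is_ZG_module (G : Type) (mul : G -> G -> G) (one : G) (N : zmodType)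
    (act : G -> N -> N) : Prop := {
  act_add : forall g (x y : N), act g (x + y)%R = (act g x + act g y)%R;
  act_one : forall x, act one x = x;
  act_mul : forall g h x, act (mul g h) x = act g (act h x)
}.

Record is_submodule (G : Type) (N : zmodType) (act : G -> N -> N) (M : N -> Prop) : Prop := {
  sub0 : M 0%R;
  subD : forall x y, M x -> M y -> M (x + y)%R;
  subN : forall x, M x -> M (- x)%R;
  subA : forall g x, M x -> M (act g x)
}.

Inductive in_submodule_gen (G : Type) (N : zmodType) (act : G -> N -> N)
    (S : N -> Prop) : N -> Prop :=
  | sm_base x : S x -> in_submodule_gen act S x
  | sm_zero : in_submodule_gen act S 0%R
  | sm_add x y : in_submodule_gen act S x -> in_submodule_gen act S y ->
                 in_submodule_gen act S (x + y)%R
  | sm_opp x : in_submodule_gen act S x -> in_submodule_gen act S (- x)%R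
  | sm_act g x : in_submodule_gen act S x -> in_submodule_gen act S (act g x).

Definition module_generated_by (G : Type) (N : zmodType) (act : G -> N -> N)
    (M : N -> Prop) (gens : seq N) : Prop :=
  (forall x, List.In x gens -> M x) /\
  (forall x, M x <-> in_submodule_gen act (fun y => List.In y gens) x).

Definition has_index (N : zmodType) (N0 : N -> Prop) (b : nat) : Prop :=
  exists reps : seq N, size reps = b /\
    (forall i j, (i < b)%N -> (j < b)%N -> N0 (nth 0%R reps i - nth 0%R reps j)%R -> i = j) /\
    (forall x : N, exists i, (i < b)%N /\ N0 (x - nth 0%R reps i)%R).

Definition gen_bound (t d b : nat) : R :=
  Rplus (INR t) (Rmult (INR (2 * d + 1)) (Rdiv (ln (INR b)) (ln (INR 2)))).

(* Main.v *)
Require Import Defs.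
From Stdlib Require Import Reals.
From mathcomp Require Import all_boot all_algebra.
From Stdlib Require Import ClassicalEpsilon Lra Lia.
From mathcomp Require Import zify.
Set Implicit Arguments. Unset Strict Implicit. Unset Printing Implicit Defensive.
Import GRing.Theory.
Lemma INR_expn2 (n : nat) : INR (2 ^ n)%N = pow (INR 2) n.
Proof.
elim: n => [|n IH]; first by rewrite /= ; lra.
rewrite expnS mult_INR IH /=; lra.
Qed.

Lemma real_bound (t d b n : nat) : (2 ^ n <= b)%N ->
  Rle (INR (t + (2 * d + 1) * n)) (gen_bound t d b).
Proof.
move=> Hb.
have h2 : INR 2 = IZR 2 by simpl; lra.
have l2 : Rlt 0 (ln (IZR 2)) by have := ln_lt_2; lra.
have Hb' : Rle (INR (2 ^ n)%N) (INR b) by apply: le_INR; apply/leP.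
rewrite INR_expn2 h2 in Hb'.
have p2 : Rlt 0 (pow 2 n) by apply: pow_lt; lra.
have Hl : Rle (Rmult (INR n) (ln (IZR 2))) (ln (INR b)).
  rewrite -ln_pow; last lra.
  case: (Rle_lt_or_eq_dec _ _ Hb') => h.
  - apply: Rlt_le; apply: ln_increasing; lra.
  - rewrite -h; apply: Req_le; f_equal; lra.
rewrite /gen_bound plus_INR mult_INR h2.
apply: Rplus_le_compat_l; apply: Rmult_le_compat_l; first by apply: pos_INR.
apply: (Rmult_le_reg_r (ln (IZR 2))) => //.
rewrite /Rdiv Rmult_assoc Rinv_l; lra.
Qed.

Local Open Scope ring_scope.

Lemma InE (T : eqType) (x : T) (s : seq T) : List.In x s <-> x \in s.
Proof.
elim: s => [|y s IH] //=; rewrite in_cons; split.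
- by case=> [->|/IH ->]; rewrite ?eqxx ?orbT.
- by case/orP=> [/eqP->|/IH]; [left|right].
Qed.

Definition zclosed (N : zmodType) (S : N -> Prop) :=
  [/\ S 0, (forall x y, S x -> S y -> S (x + y)) & (forall x, S x -> S (- x))].

Lemma zclosedB (N : zmodType) (S : N -> Prop) x y : zclosed S -> S x -> S y -> S (x - y).
Proof. by case=> _ HD HN Hx Hy; apply: HD => //; apply: HN. Qed.

Lemma zclosedZ (N : zmodType) (S : N -> Prop) x k : zclosed S -> S x -> S (x *~ k).
Proof.
case=> H0 HD HN Hx.
have Hn : forall n, S (x *+ n) by elim=> [|n IH]; rewrite ?mulr0n // mulrS; apply: HD.
case: k => n; first by rewrite -pmulrn.
by rewrite NegzE mulrNz -pmulrn; apply: HN.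
Qed.

Fixpoint zspan (N : zmodType) (us : seq N) (x : N) : Prop :=
  match us with [::] => x = 0 | u :: us' => exists k : int, zspan us' (x - u *~ k) end.

Lemma zspan0 (N : zmodType) (us : seq N) : zspan us 0.
Proof. elim: us => //= u us IH; exists 0; by rewrite mulr0z subr0. Qed.

Lemma zspanD (N : zmodType) (us : seq N) x y : zspan us x -> zspan us y -> zspan us (x + y).
Proof.
elim: us x y => [|u us IH] x y /=; first by move=> -> ->; rewrite addr0.
case=> k Hx [l Hy]; exists (k + l); have := IH _ _ Hx Hy.
by rewrite mulrzDr opprD addrACA.
Qed.

Lemma zspanN (N : zmodType) (us : seq N) x : zspan us x -> zspan us (- x).
Proof.
elim: us x => [|u us IH] x /=; first by move=> ->; rewrite oppr0.
case=> k Hx; exists (- k); have := IH _ Hx.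
by rewrite mulrNz opprD.
Qed.

Lemma zspan_zclosed (N : zmodType) (us : seq N) : zclosed (zspan us).
Proof. split; [exact: zspan0 | exact: zspanD | exact: zspanN]. Qed.

Lemma zspan_cons (N : zmodType) (u : N) us x : zspan us x -> zspan (u :: us) x.
Proof. by move=> H; exists 0; rewrite mulr0z subr0. Qed.

Lemma zspan_head (N : zmodType) (u : N) us : zspan (u :: us) u.
Proof. by exists 1; rewrite mulr1z subrr; apply: zspan0. Qed.


Lemma add_fun_props (N : zmodType) (f : N -> N) :
  (forall x y, f (x + y) = f x + f y) ->
  (forall x k, f (x *~ k) = f x *~ k).
Proof.
move=> fD.
have f0 : f 0 = 0.
  have h := fD 0 0; rewrite addr0 in h.
  by rewrite -[RHS](subrr (f 0)) {2}h addrK.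
have fN : forall x, f (- x) = - f x.
  move=> x; rewrite -[LHS](addKr (f x)) -fD subrr f0 addr0 //.
have fn : forall x n, f (x *+ n) = f x *+ n.
  by move=> x; elim=> [|n IH]; rewrite ?mulr0n // !mulrS fD IH.
move=> x [] n; first by rewrite -!pmulrn.
by rewrite NegzE !mulrNz -!pmulrn fN fn.
Qed.

Lemma zspan_map (N : zmodType) (f : N -> N) (S : N -> Prop) (us : seq N) x :
  (forall x y, f (x + y) = f x + f y) -> zclosed S ->
  (forall u, u \in us -> S (f u)) -> zspan us x -> S (f x).
Proof.
move=> fD HS; elim: us x => [|u us IH] x Hu /=.
  move=> ->; case: HS => H0 _ _.
  by have := add_fun_props fD 0 0; rewrite mulr0z => ->.
case=> k Hk.
have -> : x = (x - u *~ k) + u *~ k by rewrite subrK.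
rewrite fD (add_fun_props fD); case: (HS) => _ HD _; apply: HD.
  by apply: IH => // v hv; apply: Hu; rewrite in_cons hv orbT.
by apply: zclosedZ => //; apply: Hu; rewrite in_cons eqxx.
Qed.

Definition Aof (N : zmodType) (N0 : N -> Prop) (us : seq N) (x : N) :=
  exists w, zspan us w /\ N0 (x - w).

Fixpoint chain (N : zmodType) (N0 : N -> Prop) (us : seq N) : Prop :=
  match us with [::] => True | u :: us' => ~ Aof N0 us' u /\ chain N0 us' end.

Lemma Aof_cons (N : zmodType) (N0 : N -> Prop) u us x : Aof N0 us x -> Aof N0 (u :: us) x.
Proof. by case=> w [Hw H]; exists w; split => //; apply: zspan_cons. Qed.

Lemma chain_ex (N : zmodType) (N0 : N -> Prop) (l : seq N) : zclosed N0 ->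
  exists us, chain N0 us /\ forall r, r \in l -> Aof N0 us r.
Proof.
move=> HN0; elim: l => [|r l [us [Hc Hl]]]; first by exists [::].
case: (classic (Aof N0 us r)) => H.
- by exists us; split=> // y; rewrite in_cons => /orP [/eqP->|/Hl].
- exists (r :: us); split; first by split.
  move=> y; rewrite in_cons => /orP [/eqP->|/Hl/Aof_cons] //.
  exists r; split; first exact: zspan_head.
  by rewrite subrr; case: HN0.
Qed.

Definition asb (P : Prop) : bool := if excluded_middle_informative P then true else false.
Lemma asbP (P : Prop) : asb P <-> P.
Proof. by rewrite /asb; case: excluded_middle_informative. Qed.

Lemma cls_ex (N : zmodType) (N0 : N -> Prop) (b : nat) (reps : seq N)
  (Hcov : forall x, exists i, (i < b)%N /\ N0 (x - nth 0 reps i)) (x : N) :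
  {i : 'I_b | N0 (x - nth 0 reps i)}.
Proof.
apply: constructive_indefinite_description.
by case: (Hcov x) => i [Hi H]; exists (Ordinal Hi).
Qed.

Lemma e2 (N : zmodType) (x y a : N) : (x + a) - (y + a) = x - y.
Proof. by rewrite (addrC y a) addrKA. Qed.
Lemma e3 (N : zmodType) (w u : N) : (w + u) - w = u.
Proof. by rewrite addrC addKr. Qed.

Lemma eqm_sym (N : zmodType) (N0 : N -> Prop) x y : zclosed N0 -> N0 (x - y) -> N0 (y - x).
Proof. by case=> _ _ HN /HN; rewrite opprB. Qed.
Lemma eqm_trans (N : zmodType) (N0 : N -> Prop) x y z : zclosed N0 ->
  N0 (x - y) -> N0 (y - z) -> N0 (x - z).
Proof. by case=> _ HD _ h1 h2; rewrite -(subrK y x) -addrA; apply: HD. Qed.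
Lemma eqm_add (N : zmodType) (N0 : N -> Prop) x y a : N0 (x - y) -> N0 ((x + a) - (y + a)).
Proof. by rewrite (addrC y a) addrKA. Qed.
Lemma eqm_addl (N : zmodType) (N0 : N -> Prop) x y a : N0 (x - y) -> N0 ((a + x) - (a + y)).
Proof. by rewrite (addrC a x) (addrC a y) => /eqm_add; apply. Qed.

Lemma count_chain (N : zmodType) (N0 : N -> Prop) (b : nat) (reps : seq N)
  (HN0 : zclosed N0)
  (Huniq : forall i j, (i < b)%N -> (j < b)%N -> N0 (nth 0 reps i - nth 0 reps j) -> i = j)
  (Hcov : forall x, exists i, (i < b)%N /\ N0 (x - nth 0 reps i)) (us : seq N) :
  chain N0 us -> (2 ^ size us <= b)%N.
Proof.
have [c cP] : exists c : N -> 'I_b, forall x, N0 (x - nth 0 reps (c x)).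
  by exists (fun x => sval (cls_ex Hcov x)) => x; apply: (svalP (cls_ex Hcov x)).
pose Aset us := [set i : 'I_b | asb (Aof N0 us (nth 0 reps i))].
suff : chain N0 us -> (2 ^ size us <= #|Aset us|)%N.
  by move=> h Hc; apply: (leq_trans (h Hc)); rewrite -[X in (_ <= X)%N]card_ord max_card.
case: (HN0) => H0 HD HN.
elim: us => [|u us IH] /=.
  move=> _; apply/card_gt0P; exists (c 0); rewrite inE; apply/asbP.
  exists 0; split => //; apply: eqm_sym => //; apply: cP.
case=> Hu Hc; rewrite expnS.
pose f (i : 'I_b) := c (nth 0 reps i + u).
have Hsub : Aset us :|: f @: Aset us \subset Aset (u :: us).
  rewrite subUset; apply/andP; split; apply/subsetP => i.
    by rewrite !inE => /asbP H; apply/asbP; apply: Aof_cons.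
  case/imsetP => j; rewrite !inE => /asbP [w [Hw Hj]] ->; apply/asbP.
  exists (w + u); split; first by apply: zspanD; [apply: zspan_cons | apply: zspan_head].
  apply: (@eqm_trans _ _ _ (nth 0 reps j + u)) => //.
    by apply: eqm_sym => //; apply: cP.
  by apply: eqm_add.
have Hinj : {in Aset us &, injective f}.
  move=> i j _ _ Hij; apply: val_inj; apply: Huniq; [exact: ltn_ord | exact: ltn_ord |].
  rewrite -(e2 _ _ u); apply: (@eqm_trans _ _ _ (nth 0 reps (f i))); [done | exact: cP |].
  by rewrite Hij; apply: eqm_sym => //; apply: cP.
have Hdis : Aset us :&: f @: Aset us = set0.
  apply/setP => i; rewrite !inE; apply/negbTE/negP => /andP [/asbP [w' [Hw' Hi]]].
  case/imsetP => j; rewrite !inE => /asbP [w [Hw Hj]] Hf.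
  apply: Hu; exists (w' - w); split; first by apply: zspanD => //; apply: zspanN.
  rewrite -[X in N0 (X - _)](e3 w u).
  apply: eqm_add; apply: (@eqm_trans _ _ _ (nth 0 reps j + u)) => //; first by apply: eqm_add; apply: eqm_sym.
  by apply: (@eqm_trans _ _ _ (nth 0 reps i)) => //; rewrite Hf; apply: cP.
have := subset_leq_card Hsub; rewrite cardsU Hdis cards0 subn0 card_in_imset //.
by rewrite addnn -mul2n; apply: leq_trans; rewrite leq_mul2l IH.
Qed.

Lemma mult_in (N : zmodType) (N0 : N -> Prop) (b : nat) (reps : seq N)
  (HN0 : zclosed N0)
  (Hcov : forall x, exists i, (i < b)%N /\ N0 (x - nth 0 reps i)) (u : N) :
  exists m, (0 < m)%N /\ N0 (u *+ m).
Proof.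
have [c cP] : exists c : N -> 'I_b, forall x, N0 (x - nth 0 reps (c x)).
  by exists (fun x => sval (cls_ex Hcov x)) => x; apply: (svalP (cls_ex Hcov x)).
pose h (i : 'I_b.+1) := c (u *+ i).
have : ~~ injectiveb h.
  by apply/negP => /injectiveP /leq_card; rewrite !card_ord ltnn.
case/injectivePn => i [j Hij Hh].
have Hc : N0 (u *+ i - u *+ j).
  apply: (@eqm_trans _ _ _ (nth 0 reps (h i))); [done | exact: cP |].
  by rewrite Hh; apply: eqm_sym; [done | exact: cP].
case: (ltngtP i j) => Hl.
- exists (j - i)%N; split; first by rewrite subn_gt0.
  by rewrite (mulrnBr u (ltnW Hl)); apply: eqm_sym; [done | exact: Hc].
- exists (i - j)%N; split; first by rewrite subn_gt0.
  by rewrite (mulrnBr u (ltnW Hl)); exact: Hc.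
- by move: Hij; rewrite (val_inj Hl) eqxx.
Qed.

Lemma e4 (N : zmodType) (z U W R : N) : z - (U - W) - R = (z - (U + R)) + W.
Proof. by rewrite opprB opprD !addrA (addrAC z W) (addrAC _ W). Qed.
Lemma e5 (N : zmodType) (z P R : N) : R + (z - P - R) = z - P.
Proof. by rewrite addrC subrK. Qed.
Lemma ek (N : zmodType) (u : N) (n : nat) (q r : int) : u *~ (q * n + r) = (u *+ n) *~ q + u *~ r.
Proof. by rewrite mulrzDr pmulrn -mulrzA mulrC. Qed.

Lemma zrel_ex (N : zmodType) (N0 : N -> Prop) (b : nat) (reps : seq N)
  (HN0 : zclosed N0)
  (Hcov : forall x, exists i, (i < b)%N /\ N0 (x - nth 0 reps i)) (us : seq N) :
  exists rel : seq N, size rel = size us /\ (forall r, r \in rel -> N0 r) /\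
    (forall J : N -> Prop, zclosed J -> (forall r, r \in rel -> J r) ->
       forall z, zspan us z -> N0 z -> J z).
Proof.
elim: us => [|u us [rel [Hs [HN IHJ]]]].
  exists [::]; split=> //; split=> // J HJ _ z /= -> _; by case: HJ.
have exP : exists m, (0 < m)%N && asb (Aof N0 us (u *+ m)).
  have [m [m0 Hm]] := mult_in HN0 Hcov u.
  exists m; rewrite m0 /=; apply/asbP; exists 0; split; [exact: zspan0 | by rewrite subr0].
case: (ex_minnP exP) => n /andP [n0 /asbP [w [Hw Hn]]] Hmin.
exists ((u *+ n - w) :: rel); split; first by rewrite /= Hs.
split.
  by move=> r; rewrite in_cons => /orP [/eqP -> | /HN].
move=> J HJc HJ z [k Hk] Hz.
have Jr : J (u *+ n - w) by apply: HJ; rewrite in_cons eqxx.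
have HJr : forall r, r \in rel -> J r by move=> r hr; apply: HJ; rewrite in_cons hr orbT.
have nz : (n%:Z != 0)%R by rewrite eqz_nat -lt0n.
have npos : (0 < n%:Z)%R by rewrite ltz_nat.
move: (divz_eq k n) (modz_ge0 k nz) (ltz_pmod k npos).
move: (k %/ n)%Z (k %% n)%Z => q r Ek r0 rn; subst k.
pose z'' := z - (u *+ n - w) *~ q - u *~ r.
have Hz'' : zspan us z''.
  rewrite /z'' mulrzBl e4 -ek; apply: zspanD => //.
  by apply: zclosedZ => //; apply: zspan_zclosed.
have Hrn : N0 (u *~ r + z'').
  rewrite /z'' e5; apply: zclosedB => //; exact: zclosedZ.
clear Hk.
have Hr0 : r = 0.
  have [m Em] : exists m : nat, r = m%:Z by exists `|r|%N; rewrite gez0_abs.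
  subst r; case: (posnP m) => [-> // | mpos]; exfalso.
  have := Hmin m; rewrite ltz_nat in rn.
  suff -> : (0 < m)%N && asb (Aof N0 us (u *+ m)) by move=> /(_ isT); rewrite leqNgt rn.
  apply/andP; split => //; apply/asbP; exists (- z''); split; first exact: zspanN.
  by rewrite opprK pmulrn.
have Nz'' : N0 z''.
  by rewrite /z'' Hr0 mulr0z subr0; apply: zclosedB => //; exact: zclosedZ.
have Jz'' := IHJ J HJc HJr _ Hz'' Nz''.
have -> : z = (u *+ n - w) *~ q + z''.
  by rewrite /z'' Hr0 mulr0z subr0 addrC subrK.
by case: (HJc) => _ HD _; apply: HD => //; apply: zclosedZ.
Qed.

Lemma In_map_mem (T : Type) (U : eqType) (f : T -> U) (x : T) (s : seq T) :
  List.In x s -> f x \in [seq f y | y <- s].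
Proof.
elim: s => //= a l IH [->|h]; rewrite in_cons ?eqxx //.
by rewrite IH ?orbT.
Qed.

Lemma grp_mulV' (G : Type) (mul : G -> G -> G) (one : G) (inv : G -> G) :
  is_group mul one inv -> forall x, mul x (inv x) = one.
Proof.
move=> H x.
rewrite -[LHS](grp_mul1 H) -[X in mul X _](grp_mulV H (inv x)) -(grp_mulA H).
by rewrite (grp_mulA H (inv x)) (grp_mulV H) (grp_mul1 H) (grp_mulV H).
Qed.

Lemma inv_one' (G : Type) (mul : G -> G -> G) (one : G) (inv : G -> G) :
  is_group mul one inv -> inv one = one.
Proof. by move=> H; rewrite -[LHS](grp_mul1 H) (grp_mulV' H). Qed.


Lemma actK' (G : Type) (mul : G -> G -> G) (one : G) (inv : G -> G) (N : zmodType)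
  (act : G -> N -> N) : is_group mul one inv -> is_ZG_module mul one act ->
  forall g x, act (inv g) (act g x) = x.
Proof. by move=> Hg Hm g x; rewrite -(act_mul Hm) (grp_mulV Hg) (act_one Hm). Qed.

Lemma actKV' (G : Type) (mul : G -> G -> G) (one : G) (inv : G -> G) (N : zmodType)
  (act : G -> N -> N) : is_group mul one inv -> is_ZG_module mul one act ->
  forall g x, act g (act (inv g) x) = x.
Proof. by move=> Hg Hm g x; rewrite -(act_mul Hm) (grp_mulV' Hg) (act_one Hm). Qed.

Lemma act_inv_inv (G : Type) (mul : G -> G -> G) (one : G) (inv : G -> G) (N : zmodType)
  (act : G -> N -> N) : is_group mul one inv -> is_ZG_module mul one act ->
  forall g x, act (inv (inv g)) x = act g x.
Proof. by move=> Hg Hm g x; rewrite -{1}(actK' Hg Hm g x) (actK' Hg Hm). Qed.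

Lemma act_inv_mul (G : Type) (mul : G -> G -> G) (one : G) (inv : G -> G) (N : zmodType)
  (act : G -> N -> N) : is_group mul one inv -> is_ZG_module mul one act ->
  forall g h x, act (inv (mul g h)) x = act (inv h) (act (inv g) x).
Proof.
move=> Hg Hm g h x.
by rewrite -{2}(actKV' Hg Hm (mul g h) x) (act_mul Hm) (actK' Hg Hm) (actK' Hg Hm).
Qed.

Theorem lemma3 (G : Type) (mul : G -> G -> G) (one : G) (inv : G -> G)
  (N : zmodType) (act : G -> N -> N) (d t b : nat) (N0 : N -> Prop) :
  is_group mul one inv ->
  (exists gens : seq G, size gens = d /\ group_generated_by mul one inv gens) ->
  is_ZG_module mul one act ->
  (exists gensN : seq N, size gensN = t /\ module_generated_by act (fun _ => True) gensN) ->
  is_submodule act N0 ->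
  has_index N0 b ->
  exists gens0 : seq N, module_generated_by act N0 gens0 /\
    Rle (INR (size gens0)) (gen_bound t d b).
Proof.
move=> Hg [gens [Hd Hgen]] Hm [gensN [Ht [_ HgN]]] Hsub [reps [Hsz [Huniq Hcov]]].
have HN0 : zclosed N0 by split; [exact: (sub0 Hsub) | exact: (subD Hsub) | exact: (subN Hsub)].
have [U [HU HUr]] := chain_ex reps HN0.
have Hall : forall x, Aof N0 U x.
  move=> x; case: (Hcov x) => i [Hi Hx].
  have : nth 0 reps i \in reps by apply: mem_nth; rewrite Hsz.
  case/HUr => w [Hw Hr].
  by exists w; split => //; apply: (eqm_trans HN0 Hx Hr).
have Hb := count_chain HN0 Huniq Hcov HU.
have [rd rdP] : exists rd : N -> N, forall y, zspan U (rd y) /\ N0 (y - rd y).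
  exists (fun y => sval (constructive_indefinite_description _ (Hall y))) => y.
  exact: (svalP (constructive_indefinite_description _ (Hall y))).
have [rel [Hrs [HrN HrJ]]] := zrel_ex HN0 Hcov U.
pose L := gensN ++ flatten [seq [seq act g u | g <- gens] ++ [seq act (inv g) u | g <- gens] | u <- U].
exists (rel ++ [seq y - rd y | y <- L]).
have Hin0 : forall x, List.In x (rel ++ [seq y - rd y | y <- L]) -> N0 x.
  move=> x /InE; rewrite mem_cat => /orP [/HrN // | /mapP [y _ ->]]; exact: (rdP y).2.
pose J := in_submodule_gen act (fun y => List.In y (rel ++ [seq y - rd y | y <- L])).
have JN0 : forall x, J x -> N0 x.
  move=> x; elim => {x}.
  - exact: Hin0.
  - exact: (sub0 Hsub).
  - by move=> x y _ Hx _ Hy; apply: (subD Hsub).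
  - by move=> x _ Hx; apply: (subN Hsub).
  - by move=> g x _ Hx; apply: (subA Hsub).
have HJc : zclosed J by split; [exact: sm_zero | exact: sm_add | exact: sm_opp].
have HJL : forall y, y \in L -> J (y - rd y).
  move=> y hy; apply: sm_base; apply/InE; rewrite mem_cat; apply/orP; right; exact: map_f.
pose S x := exists j z, J j /\ zspan U z /\ x = j + z.
have HSc : zclosed S.
  split.
  - exists 0, 0; split; [exact: sm_zero | split; [exact: zspan0 | by rewrite addr0]].
  - move=> x y [j [z [Hj [Hz ->]]]] [j' [z' [Hj' [Hz' ->]]]].
    exists (j + j'), (z + z'); split; [exact: sm_add | split; [exact: zspanD | by rewrite addrACA]].
  - move=> x [j [z [Hj [Hz ->]]]]; exists (- j), (- z).
    by split; [exact: sm_opp | split; [exact: zspanN | by rewrite opprD]].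
have HSL : forall y, y \in L -> S y.
  move=> y hy; exists (y - rd y), (rd y).
  by split; [exact: HJL | split; [exact: (rdP y).1 | by rewrite subrK]].
have HSact : forall g, List.In g gens -> forall y, S y -> S (act g y) /\ S (act (inv g) y).
  move=> g hg y [j [z [Hj [Hz ->]]]].
  have Hg' : forall h, (h = g \/ h = inv g) -> S (act h (j + z)).
    move=> h Hh; rewrite (act_add Hm); case: (HSc) => _ HD _; apply: HD.
      exists (act h j), 0; split; [exact: sm_act | split; [exact: zspan0 | by rewrite addr0]].
    apply: (@zspan_map _ (act h) S U z) => //; first exact: (act_add Hm).
    move=> u hu; apply: HSL; rewrite mem_cat; apply/orP; right.
    apply/flattenP; exists ([seq act g u | g <- gens] ++ [seq act (inv g) u | g <- gens]).
      by apply: (map_f (fun u => [seq act g u | g <- gens] ++ [seq act (inv g) u | g <- gens])).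
    by rewrite mem_cat; case: Hh => ->; apply/orP; [left | right]; apply: In_map_mem.
  by split; apply: Hg'; [left | right].
have HSall : forall g, in_subgroup_gen mul one inv (fun x => List.In x gens) g ->
    forall y, S y -> S (act g y) /\ S (act (inv g) y).
  move=> g; elim => {g}.
  - exact: HSact.
  - by move=> y Hy; rewrite (inv_one' Hg) (act_one Hm).
  - move=> g h _ IHg _ IHh y Hy; rewrite (act_mul Hm) (act_inv_mul Hg Hm); split.
      by apply: (IHg _ _).1; exact: (IHh _ Hy).1.
    by apply: (IHh _ _).2; exact: (IHg _ Hy).2.
  - move=> g _ IHg y Hy; rewrite (act_inv_inv Hg Hm).
    by split; [exact: (IHg _ Hy).2 | exact: (IHg _ Hy).1].
have HSN : forall x, S x.
  move=> x; have := (HgN x).1 I; elim => {x}.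
  - by move=> x /InE hx; apply: HSL; rewrite mem_cat hx.
  - by case: HSc.
  - by move=> x y _ Hx _ Hy; case: HSc => _ HD _; apply: HD.
  - by move=> x _ Hx; case: HSc => _ _ HN; apply: HN.
  - by move=> g x _ Hx; exact: (HSall g (Hgen g) x Hx).1.
split; [split|].
- exact: Hin0.
- move=> x; split; last exact: JN0.
  move=> Hx; case: (HSN x) => j [z [Hj [Hz Ex]]].
  have Nz : N0 z.
    have -> : z = x - j by rewrite Ex e3.
    by apply: zclosedB => //; exact: JN0.
  have Jz : J z.
    apply: (HrJ J HJc) => // r hr; apply: sm_base; apply/InE; by rewrite mem_cat hr.
  by rewrite Ex; apply: sm_add.
- have HL : forall U' : seq N, size (flatten [seq [seq act g u | g <- gens] ++
      [seq act (inv g) u | g <- gens] | u <- U']) = (size U' * (2 * d))%N.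
    elim => //= u U' IH; rewrite size_cat IH size_cat !size_map Hd.
    by rewrite mulSn; lia.
  suff -> : size (rel ++ [seq y - rd y | y <- L]) = (t + (2 * d + 1) * size U)%N.
    exact: real_bound.
  rewrite size_cat size_map size_cat HL Hrs Ht.
  lia.
Qed.
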